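(* Let $(W,\odot,\mathbb{1})$ be a monoid and let $(M,+,\mathbb{0},\otimes)$ be an $\omega$-continuous (left) $W$-module. Then for every $W$-wgcl program $C$, the weakest preweighting transformer $\mathrm{wp}[\![C]\!]$ is a well-defined $\omega$-continuous map $\mathrm{Wt}\to\mathrm{Wt}$ on the module of weightings $\mathrm{Wt}=M^{\Sigma}$ (i.e. it preserves suprema of increasing $\omega$-chains). In particular, for every loop $\mathtt{while}(\varphi)\{C\}$ and every $f\in\mathrm{Wt}$, if $\Phi_f(X)=[\neg\varphi]\cdot f+[\varphi]\cdot \mathrm{wp}[\![C]\!](X)$ is its wp-characteristic function with respect to $f$, then $$\mathrm{wp}[\![\mathtt{while}(\varphi)\{C\}]\!](f)=\bigsqcup_{i\in\mathbb{N}}\Phi_f^{\,i}(\mathbb{0}),$$ where $\mathbb{0}$ denotes the constant-$\mathbb{0}$ weighting and $\bigsqcup$ is the supremum with respect to the (pointwise) natural order.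
   Context: A (left) module over a monoid $(W,\odot,\mathbb{1})$ is a commutative monoid $(M,+,\mathbb{0})$ with an action $\otimes\colon W\times M\to M$ such that $(v\odot w)\otimes a=v\otimes(w\otimes a)$, $v\otimes(a+b)=(v\otimes a)+(v\otimes b)$, $\mathbb{1}\otimes a=a$ and $v\otimes\mathbb{0}=\mathbb{0}$ for all $v,w\in W$, $a,b\in M$. The natural order on $M$ is $a\preceq b$ iff there is $c\in M$ with $a+c=b$; $M$ is naturally ordered if $\preceq$ is a partial order (then $\mathbb{0}$ is its least element). $M$ is $\omega$-continuous if it is naturally ordered, every increasing $\omega$-chain in $(M,\preceq)$ has a supremum, and addition (in each argument) and, for each fixed $w\in W$, the map $a\mapsto w\otimes a$ preserve suprema of increasing $\omega$-chains. Program states: $\Sigma$ is the set of states (maps from program variables to values); an expression $E$ has a value $E(\sigma)$ in state $\sigma$; guards $\varphi$ are predicates on states; $\sigma[x\mapsto v]$ is $\sigma$ with $x$ updated to $v$. $W$-wgcl programs are generated by $C::= x:=E \mid C;C \mid \mathtt{if}(\varphi)\{C\}\mathtt{else}\{C\} \mid \{C\}\oplus\{C\} \mid \mathtt{weight}\ a \ (a\in W)\mid \mathtt{while}(\varphi)\{C\}$. Weightings: $\mathrm{Wt}=M^{\Sigma}$ (functions $\Sigma\to M$) with pointwise addition, zero, scalar multiplication $(a\otimes f)(\sigma)=a\otimes f(\sigma)$ and pointwise natural order. For a guard $\varphi$, $([\varphi]\cdot f)(\sigma)=f(\sigma)$ if $\sigma\models\varphi$ and $\mathbb{0}$ otherwise.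 $f[x/E](\sigma)=f(\sigma[x\mapsto E(\sigma)])$. The weakest preweighting transformer is defined by induction on programs: $\mathrm{wp}[\![x:=E]\!](f)=f[x/E]$; $\mathrm{wp}[\![C_1;C_2]\!](f)=\mathrm{wp}[\![C_1]\!](\mathrm{wp}[\![C_2]\!](f))$; $\mathrm{wp}[\![\mathtt{if}(\varphi)\{C_1\}\mathtt{else}\{C_2\}]\!](f)=[\varphi]\cdot\mathrm{wp}[\![C_1]\!](f)+[\neg\varphi]\cdot\mathrm{wp}[\![C_2]\!](f)$; $\mathrm{wp}[\![\{C_1\}\oplus\{C_2\}]\!](f)=\mathrm{wp}[\![C_1]\!](f)+\mathrm{wp}[\![C_2]\!](f)$; $\mathrm{wp}[\![\mathtt{weight}\ a]\!](f)=a\otimes f$; $\mathrm{wp}[\![\mathtt{while}(\varphi)\{C'\}]\!](f)$ is the least fixed point (w.r.t. the pointwise natural order) of $X\mapsto[\neg\varphi]\cdot f+[\varphi]\cdot\mathrm{wp}[\![C']\!](X)$. *)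

(* Defs.v *)
Set Implicit Arguments.

Section Weighted.

Variables (W : Type) (wmul : W -> W -> W) (wone : W).
Variables (M : Type) (madd : M -> M -> M) (mzero : M) (act : W -> M -> M).

Definition is_monoid : Prop :=
  (forall u v w, wmul (wmul u v) w = wmul u (wmul v w)) /\
  (forall w, wmul wone w = w) /\ (forall w, wmul w wone = w).

Definition is_comm_monoid : Prop :=
  (forall a b c, madd (madd a b) c = madd a (madd b c)) /\
  (forall a b, madd a b = madd b a) /\
  (forall a, madd mzero a = a).

Definition is_left_module : Prop :=
  is_comm_monoid /\
  (forall v w a, act (wmul v w) a = act v (act w a)) /\
  (forall v a b, act v (madd a b) = madd (act v a) (act v b)) /\
  (forall a, act wone a = a) /\
  (forall v, act v mzero = mzero).

Definition nle (a b : M) : Prop := exists c, madd a c = b.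

Definition increasing_chain {T : Type} (le : T -> T -> Prop) (c : nat -> T) : Prop :=
  forall n, le (c n) (c (S n)).

Definition is_sup {T : Type} (le : T -> T -> Prop) (c : nat -> T) (s : T) : Prop :=
  (forall n, le (c n) s) /\ (forall u, (forall n, le (c n) u) -> le s u).

Definition naturally_ordered : Prop :=
  forall a b, nle a b -> nle b a -> a = b.

Definition omega_continuous_module : Prop :=
  naturally_ordered /\
  (forall c, increasing_chain nle c -> exists s, is_sup nle c s) /\
  (forall c s b, increasing_chain nle c -> is_sup nle c s ->
       is_sup nle (fun n => madd (c n) b) (madd s b)) /\
  (forall c s b, increasing_chain nle c -> is_sup nle c s ->
       is_sup nle (fun n => madd b (c n)) (madd b s)) /\
  (forall w c s, increasing_chain nle c -> is_sup nle c s ->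
       is_sup nle (fun n => act w (c n)) (act w s)).

Variables (Var Val : Type) (var_eq_dec : forall x y : Var, {x = y} + {x <> y}).

Definition State := Var -> Val.
Definition upd (s : State) (x : Var) (v : Val) : State :=
  fun y => if var_eq_dec x y then v else s y.

Inductive prog : Type :=
| Assign : Var -> (State -> Val) -> prog
| Seq : prog -> prog -> prog
| Ite : (State -> bool) -> prog -> prog -> prog
| Choice : prog -> prog -> prog
| Weight : W -> prog
| While : (State -> bool) -> prog -> prog.

Definition Wt := State -> M.
Definition wt_add (f g : Wt) : Wt := fun s => madd (f s) (g s).
Definition wt_zero : Wt := fun _ => mzero.
Definition wt_act (a : W) (f : Wt) : Wt := fun s => act a (f s).
Definition wt_le (f g : Wt) : Prop := forall s, nle (f s) (g s).
Definition guard (phi : State -> bool) (f : Wt) : Wt :=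
  fun s => if phi s then f s else mzero.
Definition neg (phi : State -> bool) : State -> bool := fun s => negb (phi s).
Definition subst (f : Wt) (x : Var) (E : State -> Val) : Wt :=
  fun s => f (upd s x (E s)).

Definition is_lfp (Phi : Wt -> Wt) (X : Wt) : Prop :=
  Phi X = X /\ (forall Y, Phi Y = Y -> wt_le X Y).

Definition char_fun (phi : State -> bool) (T : Wt -> Wt) (f : Wt) : Wt -> Wt :=
  fun X => wt_add (guard (neg phi) f) (guard phi (T X)).

(* [is_wp C T] : T is (a) weakest preweighting transformer of C, following the
   inductive definition; the loop case requires a least fixed point, whose
   existence is part of the claim of well-definedness. *)
Fixpoint is_wp (C : prog) (T : Wt -> Wt) : Prop :=
  match C with
  | Assign x E => forall f, T f = subst f x E
  | Seq C1 C2 => exists T1 T2, is_wp C1 T1 /\ is_wp C2 T2 /\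
                   forall f, T f = T1 (T2 f)
  | Ite phi C1 C2 => exists T1 T2, is_wp C1 T1 /\ is_wp C2 T2 /\
                   forall f, T f = wt_add (guard phi (T1 f)) (guard (neg phi) (T2 f))
  | Choice C1 C2 => exists T1 T2, is_wp C1 T1 /\ is_wp C2 T2 /\
                   forall f, T f = wt_add (T1 f) (T2 f)
  | Weight a => forall f, T f = wt_act a f
  | While phi C' => exists T', is_wp C' T' /\
                   forall f, is_lfp (char_fun phi T' f) (T f)
  end.

Definition omega_continuous_map (T : Wt -> Wt) : Prop :=
  forall F G, increasing_chain wt_le F -> is_sup wt_le F G ->
    is_sup wt_le (fun n => T (F n)) (T G).

End Weighted.

(* Main.v *)
Require Import Defs.
From Stdlib Require Import FunctionalExtensionality IndefiniteDescription Lia.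

Section Proof.
Variables (W : Type) (wmul : W -> W -> W) (wone : W)
  (M : Type) (madd : M -> M -> M) (mzero : M) (act : W -> M -> M)
  (Var Val : Type) (var_eq_dec : forall x y : Var, {x = y} + {x <> y}).
Hypothesis HM : is_left_module wmul wone madd mzero act.
Hypothesis Hc : omega_continuous_module madd act.

Local Notation le := (nle madd).
Local Notation St := (State Var Val).
Local Notation WT := (Wt M Var Val).
Local Notation wle := (@wt_le M madd Var Val).

Lemma m_assoc a b c : madd (madd a b) c = madd a (madd b c).
Proof. destruct HM as [[H _] _]; apply H. Qed.
Lemma m_comm a b : madd a b = madd b a.
Proof. destruct HM as [[_ [H _]] _]; apply H. Qed.
Lemma m_lid a : madd mzero a = a.
Proof. destruct HM as [[_ [_ H]] _]; apply H. Qed.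
Lemma m_rid a : madd a mzero = a.
Proof. rewrite m_comm; apply m_lid. Qed.

Lemma le_refl a : le a a.
Proof. exists mzero; apply m_rid. Qed.
Lemma le_trans a b c : le a b -> le b c -> le a c.
Proof. intros [x Hx] [y Hy]; exists (madd x y); rewrite <- m_assoc, Hx; exact Hy. Qed.
Lemma le_zero a : le mzero a.
Proof. exists a; apply m_lid. Qed.
Lemma le_antisym a b : le a b -> le b a -> a = b.
Proof. destruct Hc as [H _]; apply H. Qed.
Lemma le_add a a' b b' : le a a' -> le b b' -> le (madd a b) (madd a' b').
Proof.
  intros [x Hx] [y Hy]; exists (madd x y); subst.
  rewrite !m_assoc; f_equal. rewrite <- !m_assoc; f_equal; apply m_comm.
Qed.

Lemma chain_mono {T} {r : T -> T -> Prop} {c : nat -> T} :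
  (forall a, r a a) -> (forall a b d, r a b -> r b d -> r a d) ->
  increasing_chain r c -> forall n m, n <= m -> r (c n) (c m).
Proof.
  intros Hr Ht Hi n m Hnm; induction Hnm; [apply Hr|]. eapply Ht; [exact IHHnm| apply Hi].
Qed.

Lemma sup_add (a b : nat -> M) sa sb :
  increasing_chain le a -> is_sup le a sa ->
  increasing_chain le b -> is_sup le b sb ->
  is_sup le (fun n => madd (a n) (b n)) (madd sa sb).
Proof.
  intros Ia Sa Ib Sb; split.
  - intro n; apply le_add; [apply Sa|apply Sb].
  - intros u Hu.
    assert (Hm : forall m, le (madd (a m) sb) u).
    { intro m. destruct Hc as [_ [_ [_ [HR _]]]].
      destruct (HR b sb (a m) Ib Sb) as [_ L]. apply L. intro n.
      destruct (Compare_dec.le_ge_dec n m) as [h|h].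
      - eapply le_trans; [|apply (Hu m)]. apply le_add; [apply le_refl|].
        apply (chain_mono le_refl le_trans Ib); lia.
      - eapply le_trans; [|apply (Hu n)]. apply le_add; [|apply le_refl].
        apply (chain_mono le_refl le_trans Ia); lia. }
    destruct Hc as [_ [_ [HL _]]].
    destruct (HL a sa sb Ia Sa) as [_ L]. apply L. exact Hm.
Qed.

Lemma sup_const {T} (r : T -> T -> Prop) (x : T) : (forall a, r a a) -> is_sup r (fun _ => x) x.
Proof. intros Hr; split; [intros; apply Hr| intros u Hu; apply (Hu 0)]. Qed.

Lemma wle_refl f : wle f f.
Proof. intro s; apply le_refl. Qed.
Lemma wle_trans f g h : wle f g -> wle g h -> wle f h.
Proof. intros A B s; eapply le_trans; [apply A|apply B]. Qed.
Lemma wle_antisym f g : wle f g -> wle g f -> f = g.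
Proof. intros A B; extensionality s; apply le_antisym; [apply A|apply B]. Qed.
Lemma wle_zero (f : WT) : wle (@wt_zero M mzero Var Val) f.
Proof. intro s; apply le_zero. Qed.

Lemma sup_unique {T} {r : T -> T -> Prop} {c x y} :
  (forall a b, r a b -> r b a -> a = b) -> is_sup r c x -> is_sup r c y -> x = y.
Proof. intros A [U1 L1] [U2 L2]; apply A; [apply L1; exact U2| apply L2; exact U1]. Qed.

Definition chsup (F : nat -> WT) (G : WT) := increasing_chain wle F /\ is_sup wle F G.

Lemma pw_sup F G : (forall s, is_sup le (fun n => F n s) (G s)) -> is_sup wle F G.
Proof.
  intros H; split.
  - intros n s; apply H.
  - intros u Hu s; apply H; intro n; apply Hu.
Qed.

Lemma wt_exsup F : increasing_chain wle F -> exists G, forall s, is_sup le (fun n => F n s) (G s).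
Proof.
  intro I.
  assert (E : forall s, exists x, is_sup le (fun n => F n s) x).
  { intro s. destruct Hc as [_ [H _]]. apply H. intro n; apply I. }
  exists (fun s => proj1_sig (constructive_indefinite_description _ (E s))).
  intro s. destruct (constructive_indefinite_description _ (E s)) as [x Sx]; exact Sx.
Qed.

Lemma chsup_pointwise F G : chsup F G -> forall s, is_sup le (fun n => F n s) (G s).
Proof.
  intros [I S]. destruct (@wt_exsup F I) as [G' S'].
  assert (E : G = G').
  { apply (sup_unique wle_antisym S (pw_sup _ _ S')). }
  subst; exact S'.
Qed.


Definition cont (T : WT -> WT) := forall F G, chsup F G -> is_sup wle (fun n => T (F n)) (T G).

Lemma cont_ocm T : cont T -> omega_continuous_map madd T.
Proof. intros H F G I S; apply H; split; auto. Qed.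

Lemma mono T a b : cont T -> wle a b -> wle (T a) (T b).
Proof.
  intros H Hab.
  set (F := fun n : nat => match n with 0 => a | _ => b end).
  assert (C : chsup F b).
  { split.
    - intros [|n]; simpl; [exact Hab| apply wle_refl].
    - split.
      + intros [|n]; simpl; [exact Hab| apply wle_refl].
      + intros u Hu; apply (Hu 1). }
  destruct (H F b C) as [U _]. apply (U 0).
Qed.

Lemma chsup_cont T F G : cont T -> chsup F G -> chsup (fun n => T (F n)) (T G).
Proof.
  intros H C; split; [|apply H; exact C].
  intro n; apply mono; [exact H| apply (proj1 C)].
Qed.

Lemma chsup_add F1 G1 F2 G2 : chsup F1 G1 -> chsup F2 G2 ->
  chsup (fun n => wt_add madd (F1 n) (F2 n)) (wt_add madd G1 G2).
Proof.
  intros C1 C2; split.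
  - intros n s; unfold wt_add; apply le_add; [apply (proj1 C1)| apply (proj1 C2)].
  - apply pw_sup; intro s; unfold wt_add.
    apply sup_add.
    + intro n; apply (proj1 C1).
    + apply chsup_pointwise; exact C1.
    + intro n; apply (proj1 C2).
    + apply chsup_pointwise; exact C2.
Qed.

Lemma chsup_guard phi F G : chsup F G ->
  chsup (fun n => guard mzero phi (F n)) (guard mzero phi G).
Proof.
  intros C; split.
  - intros n s; unfold guard; destruct (phi s); [apply (proj1 C)| apply le_refl].
  - apply pw_sup; intro s; unfold guard; destruct (phi s).
    + apply chsup_pointwise; exact C.
    + apply (sup_const _ _ le_refl).
Qed.

Lemma chsup_subst x E F G : chsup F G ->
  chsup (fun n => subst var_eq_dec (F n) x E) (subst var_eq_dec G x E).
Proof.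
  intros C; split.
  - intros n s; unfold subst; apply (proj1 C).
  - apply pw_sup; intro s; unfold subst. apply (chsup_pointwise _ _ C).
Qed.

Lemma act_mono w a b : le a b -> le (act w a) (act w b).
Proof.
  intros [c Hc']; exists (act w c); subst.
  destruct HM as [_ [_ [H _]]]; symmetry; apply H.
Qed.

Lemma chsup_act w F G : chsup F G ->
  chsup (fun n => wt_act act w (F n)) (wt_act act w G).
Proof.
  intros C; split.
  - intros n s; unfold wt_act; apply act_mono; apply (proj1 C).
  - apply pw_sup; intro s; unfold wt_act.
    destruct Hc as [_ [_ [_ [_ H]]]]. apply H.
    + intro n; apply (proj1 C).
    + apply (chsup_pointwise _ _ C).
Qed.

Lemma chsup_const (f : WT) : chsup (fun _ => f) f.
Proof. split; [intro n; apply wle_refl| apply (sup_const _ _ wle_refl)]. Qed.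

Lemma cont_comp T1 T2 : cont T1 -> cont T2 -> cont (fun f => T1 (T2 f)).
Proof. intros H1 H2 F G C; apply H1; apply chsup_cont; auto. Qed.
Lemma cont_add T1 T2 : cont T1 -> cont T2 -> cont (fun f => wt_add madd (T1 f) (T2 f)).
Proof. intros H1 H2 F G C; apply chsup_add; apply chsup_cont; auto. Qed.
Lemma cont_guard phi T : cont T -> cont (fun f => guard mzero phi (T f)).
Proof. intros H F G C; apply chsup_guard; apply chsup_cont; auto. Qed.
Lemma cont_const (g : WT) : cont (fun _ => g).
Proof. intros F G C; apply chsup_const. Qed.
Lemma cont_subst x E : cont (fun f => subst var_eq_dec f x E).
Proof. intros F G C; apply chsup_subst; auto. Qed.
Lemma cont_act w : cont (fun f => wt_act act w f).
Proof. intros F G C; apply chsup_act; auto. Qed.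

Lemma cont_char phi T f : cont T -> cont (char_fun madd mzero phi T f).
Proof.
  intros H. unfold char_fun. apply cont_add; [apply cont_const| apply cont_guard; exact H].
Qed.

Arguments cont_char phi {T} f.
Definition K (Phi : WT -> WT) i := Nat.iter i Phi (@wt_zero M mzero Var Val).

Lemma kleene (Phi : WT -> WT) : cont Phi -> exists L, chsup (K Phi) L /\ is_lfp madd Phi L.
Proof.
  intros HP.
  assert (I : increasing_chain wle (K Phi)).
  { intro n; induction n.
    - apply wle_zero.
    - change (wle (Phi (K Phi n)) (Phi (K Phi (S n)))). apply mono; auto. }
  destruct (@wt_exsup (K Phi) I) as [L SL].
  pose proof (pw_sup _ _ SL) as SS.
  exists L; split; [split; auto|].
  split.
  - pose proof (HP _ _ (conj I SS)) as H1.
    assert (H2 : is_sup wle (fun n => Phi (K Phi n)) L).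
    { split.
      - intro n; apply (proj1 SS (S n)).
      - intros u Hu. apply (proj2 SS). intros [|n]; [apply wle_zero| apply Hu]. }
    apply (sup_unique wle_antisym H1 H2).
  - intros Y HY. apply (proj2 SS). intro n; induction n.
    + apply wle_zero.
    + change (wle (Phi (K Phi n)) Y). rewrite <- HY. apply mono; auto.
Qed.

Arguments kleene {Phi}.
Lemma lfp_unique (Phi : WT -> WT) X Y : is_lfp madd Phi X -> is_lfp madd Phi Y -> X = Y.
Proof.
  intros [FX LX] [FY LY]; apply wle_antisym; [apply LX; exact FY| apply LY; exact FX].
Qed.

Arguments lfp_unique {Phi X Y}.
Lemma lfp_sup (Phi : WT -> WT) X : cont Phi -> is_lfp madd Phi X -> chsup (K Phi) X.
Proof.
  intros HP HX. destruct (kleene HP) as [L [C HL]].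
  rewrite (lfp_unique HX HL); exact C.
Qed.

Arguments lfp_sup {Phi X}.
Lemma while_cont phi T' T : cont T' ->
  (forall f, is_lfp madd (char_fun madd mzero phi T' f) (T f)) -> cont T.
Proof.
  intros HT' HT F G H.
  assert (HS : forall f, chsup (K (char_fun madd mzero phi T' f)) (T f)).
  { intro f; apply lfp_sup; [apply cont_char; auto| apply HT]. }
  assert (Hi : forall i, chsup (fun n => K (char_fun madd mzero phi T' (F n)) i)
                               (K (char_fun madd mzero phi T' G) i)).
  { induction i.
    - unfold K; simpl; apply chsup_const.
    - unfold K; simpl. fold (K (char_fun madd mzero phi T' G) i).
      change (chsup (fun n => char_fun madd mzero phi T' (F n)
                                 (K (char_fun madd mzero phi T' (F n)) i))
                    (char_fun madd mzero phi T' G (K (char_fun madd mzero phi T' G) i))).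
      unfold char_fun. apply chsup_add.
      + apply chsup_guard; exact H.
      + apply chsup_guard; apply chsup_cont; auto. }
  split.
  - intro n. destruct (HS (F n)) as [_ [_ L]]. apply L. intro i.
    eapply wle_trans; [apply (proj1 (proj2 (Hi i)) n)| apply (proj1 (proj2 (HS G)) i)].
  - intros u Hu. destruct (HS G) as [_ [_ L]]. apply L. intro i.
    destruct (Hi i) as [_ [_ Li]]. apply Li. intro n.
    eapply wle_trans; [apply (proj1 (proj2 (HS (F n))) i)| apply Hu].
Qed.

Arguments while_cont phi {T' T}.
Lemma P_all C :
  (exists T, is_wp madd mzero act var_eq_dec C T) /\
  (forall T, is_wp madd mzero act var_eq_dec C T -> cont T) /\
  (forall T1 T2, is_wp madd mzero act var_eq_dec C T1 ->
                 is_wp madd mzero act var_eq_dec C T2 -> T1 = T2).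
Proof.
  induction C as [x E | C1 IH1 C2 IH2 | phi C1 IH1 C2 IH2 | C1 IH1 C2 IH2 | a | phi C IH]; simpl.
  - split; [exists (fun f : WT => subst var_eq_dec f x E); intro f; reflexivity|].
    split.
    + intros T HT. replace T with (fun f : WT => subst var_eq_dec f x E)
        by (extensionality f; symmetry; auto). apply cont_subst.
    + intros T1 T2 H1 H2; extensionality f; rewrite H1, H2; reflexivity.
  - destruct IH1 as [[A1 H1] [C1c U1]]; destruct IH2 as [[A2 H2] [C2c U2]].
    split; [exists (fun f : WT => A1 (A2 f)), A1, A2; auto|].
    split.
    + intros T [A [B [HA [HB HT]]]]. replace T with (fun f : WT => A (B f))
        by (extensionality f; symmetry; auto). apply cont_comp; auto.
    + intros Ta Tb [A [B [HA [HB HT]]]] [A' [B' [HA' [HB' HT']]]].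
      extensionality f; rewrite HT, HT', (U1 _ _ HA HA'), (U2 _ _ HB HB'); reflexivity.
  - destruct IH1 as [[A1 H1] [C1c U1]]; destruct IH2 as [[A2 H2] [C2c U2]].
    split; [exists (fun f : WT => wt_add madd (guard mzero phi (A1 f)) (guard mzero (neg phi) (A2 f))), A1, A2; auto|].
    split.
    + intros T [A [B [HA [HB HT]]]].
      replace T with (fun f : WT => wt_add madd (guard mzero phi (A f)) (guard mzero (neg phi) (B f)))
        by (extensionality f; symmetry; auto).
      apply cont_add; apply cont_guard; auto.
    + intros Ta Tb [A [B [HA [HB HT]]]] [A' [B' [HA' [HB' HT']]]].
      extensionality f; rewrite HT, HT', (U1 _ _ HA HA'), (U2 _ _ HB HB'); reflexivity.
  - destruct IH1 as [[A1 H1] [C1c U1]]; destruct IH2 as [[A2 H2] [C2c U2]].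
    split; [exists (fun f : WT => wt_add madd (A1 f) (A2 f)), A1, A2; auto|].
    split.
    + intros T [A [B [HA [HB HT]]]].
      replace T with (fun f : WT => wt_add madd (A f) (B f))
        by (extensionality f; symmetry; auto).
      apply cont_add; auto.
    + intros Ta Tb [A [B [HA [HB HT]]]] [A' [B' [HA' [HB' HT']]]].
      extensionality f; rewrite HT, HT', (U1 _ _ HA HA'), (U2 _ _ HB HB'); reflexivity.
  - split; [exists (fun f : WT => wt_act act a f); intro f; reflexivity|].
    split.
    + intros T HT. replace T with (fun f : WT => wt_act act a f)
        by (extensionality f; symmetry; auto). apply cont_act.
    + intros T1 T2 H1 H2; extensionality f; rewrite H1, H2; reflexivity.
  - destruct IH as [[T' H'] [Cc U]].
    split.
    + assert (E : forall f, exists L, is_lfp madd (char_fun madd mzero phi T' f) L).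
      { intro f. destruct (kleene (cont_char phi f (Cc _ H'))) as [L [_ HL]]; eauto. }
      exists (fun f : WT => proj1_sig (constructive_indefinite_description _ (E f))).
      exists T'; split; auto. intro f.
      destruct (constructive_indefinite_description _ (E f)) as [L HL]; simpl; exact HL.
    + split.
      * intros T [A [HA HT]]. apply (while_cont phi (Cc _ HA) HT).
      * intros Ta Tb [A [HA HTa]] [B [HB HTb]]. rewrite (U _ _ HA HB) in HTa.
        extensionality f; apply (lfp_unique (HTa f) (HTb f)).
Qed.

Lemma main_in : forall C : prog W Var Val,
    (exists T, is_wp madd mzero act var_eq_dec C T /\
       forall T', is_wp madd mzero act var_eq_dec C T' -> T' = T) /\
    (forall T, is_wp madd mzero act var_eq_dec C T ->
       omega_continuous_map madd T) /\
    (forall (phi : State Var Val -> bool) (C' : prog W Var Val)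
            (T T' : Wt M Var Val -> Wt M Var Val) (f : Wt M Var Val),
       C = While phi C' ->
       is_wp madd mzero act var_eq_dec (While phi C') T ->
       is_wp madd mzero act var_eq_dec C' T' ->
       is_sup (@wt_le M madd Var Val)
         (fun i => Nat.iter i (char_fun madd mzero phi T' f) (@wt_zero M mzero Var Val))
         (T f)).
Proof.
  intro C. destruct (P_all C) as [[T0 H0] [Cc U]].
  split; [exists T0; split; auto; intros T' HT'; apply U; auto|].
  split; [intros T HT; apply cont_ocm; auto|].
  intros phi C' T T' f _ [T'' [H'' HT]] H'.
  destruct (P_all C') as [_ [Cc' U']].
  rewrite (U' _ _ H'' H') in HT.
  apply (proj2 (lfp_sup (cont_char phi f (Cc' _ H')) (HT f))).
Qed.

End Proof.

Theorem mainTheorem1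
  (W : Type) (wmul : W -> W -> W) (wone : W)
  (M : Type) (madd : M -> M -> M) (mzero : M) (act : W -> M -> M)
  (Var Val : Type) (var_eq_dec : forall x y : Var, {x = y} + {x <> y})
  (HW : is_monoid wmul wone)
  (HM : is_left_module wmul wone madd mzero act)
  (Hc : omega_continuous_module madd act) :
  forall C : prog W Var Val,
    (* wp[C] is well-defined: there is exactly one transformer satisfying the definition *)
    (exists T, is_wp madd mzero act var_eq_dec C T /\
       forall T', is_wp madd mzero act var_eq_dec C T' -> T' = T) /\
    (* it is omega-continuous *)
    (forall T, is_wp madd mzero act var_eq_dec C T ->
       omega_continuous_map madd T) /\
    (* Kleene characterisation of loops *)
    (forall (phi : State Var Val -> bool) (C' : prog W Var Val)
            (T T' : Wt M Var Val -> Wt M Var Val) (f : Wt M Var Val),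
       C = While phi C' ->
       is_wp madd mzero act var_eq_dec (While phi C') T ->
       is_wp madd mzero act var_eq_dec C' T' ->
       is_sup (@wt_le M madd Var Val)
         (fun i => Nat.iter i (char_fun madd mzero phi T' f) (@wt_zero M mzero Var Val))
         (T f)).
Proof.
  eapply main_in; eassumption.
Qed.
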